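(* Let $S$ be a fixed set of permissible block sizes and $L$ a fixed set of permissible loop orders, and let $\mathcal{C}$ be the class of all Greechie diagrams all of whose blocks have size in $S$ and all of whose loops have order in $L$, optionally further restricted to connected diagrams. Then the only irreducible diagrams in $\mathcal{C}$ are those with exactly one block; equivalently, every $D\in\mathcal{C}$ with more than one block has a block $e$ with $D-e\in\mathcal{C}$.
   Context: A diagram is a pair $(V,E)$ with $V\neq\emptyset$ a set of atoms and $E$ a set of nonempty subsets of $V$ (blocks). A loop of order $n\ge2$ is a sequence $(e_1,\dots,e_n)$ of mutually different blocks for which there are mutually distinct atoms $\nu_1,\dots,\nu_n$ with $\nu_i\in e_i\cap e_{i+1}$ ($i=1,\dots,n$, $e_{n+1}=e_1$). A Greechie diagram is a diagram such that: (1) every atom belongs to at least one block; (2) if there are at least two atoms, every block has at least 2 elements; (3) every block intersecting another block has at least 3 elements; (4) two different blocks intersect in at most one atom; (5) there is no loop of order 3. A diagram is connected if for all atoms $\nu,\nu'$ there are blocks $e_1,\dots,e_k$ with $\nu\in e_1$, $\nu'\in e_k$ and $e_i\cap e_{i+1}\neq\emptyset$ for $1\le i\le k-1$. For $e\in E$, $D-e$ is obtained by removing $e$ and any atoms that lay in $e$ but in no other block. $D\in\mathcal{C}$ is irreducible if there is no block $e$ of $D$ with $D-e\in\mathcal{C}$. *)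

(* Defs.v *)
(* A diagram on a finite carrier type T:
   atoms V : {set T}, blocks E : {set {set T}}. *)
From mathcomp Require Import all_boot.
Set Implicit Arguments. Unset Strict Implicit. Unset Printing Implicit Defensive.

Section Diagrams.
Variable T : finType.

Definition diagram (V : {set T}) (E : {set {set T}}) : Prop :=
  V != set0 /\ (forall e, e \in E -> e != set0 /\ e \subset V).

(* A loop of order n >= 2: mutually different blocks e_0..e_{n-1} of E and
   mutually distinct atoms nu_0..nu_{n-1} with nu_i in e_i /\ e_{i+1}
   (indices mod n; ordS is the cyclic successor on 'I_n). *)
Definition has_loop (E : {set {set T}}) (n : nat) : Prop :=
  2 <= n /\
  exists (es : 'I_n -> {set T}) (nus : 'I_n -> T),
    [/\ injective es, injective nus, (forall i, es i \in E) &
        forall i, nus i \in es i /\ nus i \in es (ordS i)].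

Definition greechie (V : {set T}) (E : {set {set T}}) : Prop :=
  diagram V E /\
  (forall v, v \in V -> exists2 e, e \in E & v \in e) /\
  (1 < #|V| -> forall e, e \in E -> 2 <= #|e|) /\
  (forall e f, e \in E -> f \in E -> e != f -> e :&: f != set0 -> 3 <= #|e|) /\
  (forall e f, e \in E -> f \in E -> e != f -> #|e :&: f| <= 1) /\
  ~ has_loop E 3.

Definition connected (V : {set T}) (E : {set {set T}}) : Prop :=
  forall v w, v \in V -> w \in V ->
    exists es : seq {set T},
      [/\ es != [::], all (fun e => e \in E) es,
          v \in head set0 es, w \in last set0 es &
          path (fun a b => a :&: b != set0) (head set0 es) (behead es)].

Definition inC (S L : nat -> Prop) (conn : bool)
    (V : {set T}) (E : {set {set T}}) : Prop :=
  [/\ greechie V E,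
      (forall e, e \in E -> S #|e|),
      (forall n, has_loop E n -> L n) &
      (conn -> connected V E)].

(* D - e: remove block e and the atoms lying in e but in no other block. *)
Definition rem_atoms (V : {set T}) (E : {set {set T}}) (e : {set T}) : {set T} :=
  [set x in V | (x \notin e) || [exists f in E :\ e, x \in f]].
Definition rem_blocks (E : {set {set T}}) (e : {set T}) : {set {set T}} := E :\ e.

Definition irreducible (S L : nat -> Prop) (conn : bool)
    (V : {set T}) (E : {set {set T}}) : Prop :=
  inC S L conn V E /\
  ~ (exists2 e, e \in E & inC S L conn (rem_atoms V E e) (rem_blocks E e)).

End Diagrams.

(* Main.v *)
Require Import Defs.
From mathcomp Require Import all_boot.
From mathcomp Require Import zify.
Set Implicit Arguments. Unset Strict Implicit. Unset Printing Implicit Defensive.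

Section Aux.
Variable T : finType.
Implicit Types (a b c e f : {set T}) (A B E : {set {set T}}) (s : seq {set T}).

Definition adj a b := a :&: b != set0.

Definition W A a b s :=
  [&& s != [::], all (mem A) s, head set0 s == a, last set0 s == b & sorted adj s].

Lemma adjI a b (x : T) : x \in a -> x \in b -> adj a b.
Proof. by move=> xa xb; apply/set0Pn; exists x; rewrite inE xa. Qed.

Lemma adjC a b : adj a b = adj b a.
Proof. by rewrite /adj setIC. Qed.

Lemma W_rev A a b s : W A a b s -> W A b a (rev s).
Proof.
case/and5P=> s0 sA ha lb ss; apply/and5P; split.
- by case: s s0 {sA ha lb ss} => // x s; rewrite rev_cons; case: (rev s).
- by rewrite all_rev.
- by move: lb; case/lastP: s s0 {sA ha ss} => // s x; rewrite rev_rcons last_rcons.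
- by move: ha; case: s s0 {sA lb ss} => // x s; rewrite rev_cons last_rcons.
rewrite rev_sorted; case: s {s0 sA ha lb} ss => //= x s.
by rewrite (@eq_path _ _ adj) // => u v; rewrite /= adjC.
Qed.

Lemma W_cat A a b c s1 s2 : adj b b -> W A a b s1 -> W A b c s2 -> W A a c (s1 ++ s2).
Proof.
move=> bb /and5P[n1 a1 h1 l1 s1s] /and5P[n2 a2 h2 l2 s2s].
case: s1 n1 a1 h1 l1 s1s => // x s1 _ a1 h1 l1 s1s.
case: s2 n2 a2 h2 l2 s2s => // y s2 _ a2 h2 l2 s2s.
apply/and5P; split => //.
- by rewrite all_cat a1 a2.
- by rewrite last_cat.
rewrite /= cat_path; apply/andP; split; first exact: s1s.
move: l1 h2 s2s => /= /eqP -> /eqP ->; by rewrite /= bb.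
Qed.

Lemma W_sub A B a b s : A \subset B -> W A a b s -> W B a b s.
Proof.
move=> AB /and5P[n1 a1 h1 l1 s1s]; apply/and5P; split => //.
apply/allP => x xs; exact: (subsetP AB _ (allP a1 x xs)).
Qed.


Lemma W_prefix A a b s1 x s2 : W A a b (s1 ++ x :: s2) -> W A a x (rcons s1 x).
Proof.
case/and5P=> _ sA ha _ ss; apply/and5P; split.
- by case: s1 {sA ha ss}.
- by move: sA; rewrite all_cat all_rcons /= => /and3P[-> -> _].
- by case: s1 {sA ss} ha.
- by rewrite last_rcons.
by move: ss; rewrite sorted_cat_cons => /andP[].
Qed.

Lemma W_head A a b s : W A a b s -> a \in A.
Proof. by case/and5P; case: s => // x s _ /= /andP[xA _] /eqP <-. Qed.

Lemma loop_sub A B n : A \subset B -> has_loop A n -> has_loop B n.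
Proof.
move=> AB [n2 [es [nus [ie inu esA H]]]]; split => //.
exists es, nus; split => // i; exact: (subsetP AB _ (esA i)).
Qed.

Lemma rem_sub E e : rem_blocks E e \subset E.
Proof. by apply/subsetP => x; rewrite /rem_blocks inE => /andP[]. Qed.

Lemma rem_atom_block V E e v : greechie V E -> v \in rem_atoms V E e ->
  exists2 f, f \in rem_blocks E e & v \in f.
Proof.
move=> [_ [H1 _]]; rewrite /rem_atoms inE => /andP[vV /orP[ve|/existsP[f /andP[fE vf]]]].
- have [f fE vf] := H1 v vV; exists f => //; rewrite /rem_blocks in_setD1 fE andbT.
  by apply/eqP => fe; move: ve; rewrite -fe vf.
- by exists f.
Qed.

Lemma rem_inC (S L : nat -> Prop) conn V E e f :
  inC S L conn V E -> e \in E -> f \in E -> f != e ->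
  (conn -> connected (rem_atoms V E e) (rem_blocks E e)) ->
  inC S L conn (rem_atoms V E e) (rem_blocks E e).
Proof.
move=> [G HS HL _] eE fE fe Hc.
have sub := rem_sub E e.
have G' := G; move: G' => [[V0 Hd] [H1 [H2 [H3 [H4 H5]]]]].
have Vsub : rem_atoms V E e \subset V.
  by apply/subsetP => x; rewrite /rem_atoms inE => /andP[].
have blk : forall g, g \in rem_blocks E e -> g \subset rem_atoms V E e.
  move=> g gE'; apply/subsetP => x xg.
  have gE := subsetP sub _ gE'.
  rewrite /rem_atoms inE (subsetP (Hd g gE).2 _ xg) /=.
  apply/orP; right; apply/existsP; exists g; by rewrite gE' xg.
split => //.
- split; [split|split; [|split; [|split; [|split]]]].
  + have fE' : f \in rem_blocks E e by rewrite /rem_blocks in_setD1 fe fE.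
    have [x xf] := set0Pn _ (Hd f fE).1.
    by apply/set0Pn; exists x; exact: (subsetP (blk f fE') _ xf).
  + move=> g gE'; split; first exact: (Hd g (subsetP sub _ gE')).1.
    exact: blk.
  + move=> v vV'; exact: rem_atom_block G vV'.
  + move=> c1 g gE'; apply: H2; last exact: subsetP sub _ gE'.
    exact: leq_trans c1 (subset_leq_card Vsub).
  + move=> a b aE bE; apply: H3; exact: subsetP sub _ _.
  + move=> a b aE bE; apply: H4; exact: subsetP sub _ _.
  + by move=> /(loop_sub sub).
- move=> g gE'; apply: HS; exact: subsetP sub _ gE'.
- by move=> n /(loop_sub sub) /HL.
Qed.

Lemma walk_exists V E a b : diagram V E -> connected V E -> a \in E -> b \in E ->
  exists s, W E a b s.
Proof.
move=> [_ Hd] Hc aE bE.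
have [x xa] := set0Pn _ (Hd a aE).1; have [y yb] := set0Pn _ (Hd b bE).1.
have [es [n0 esE xh yl ps]] := Hc x y (subsetP (Hd a aE).2 _ xa) (subsetP (Hd b bE).2 _ yb).
exists (a :: rcons es b); apply/and5P; split => //.
- by rewrite /= aE all_rcons /= bE esE.
- by rewrite /= last_rcons.
case: es n0 esE xh yl ps => // z es _ _ /= xz yl ps.
rewrite (adjI xa xz) /= rcons_path ps /=.
exact: adjI yl yb.
Qed.

Lemma nocut V E e0 : diagram V E -> connected V E -> e0 \in E ->
  exists2 e, e \in E & forall u, u \in E -> u != e -> exists s, W (rem_blocks E e) e0 u s.
Proof.
move=> D C e0E.
pose P u n := [exists t : n.-tuple {set T}, W E e0 u t] || (u \notin E).
have exP : forall u, exists n, P u n.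
  move=> u; case: (boolP (u \in E)) => uE; last by exists 0; rewrite /P uE orbT.
  have [s Ws] := walk_exists D C e0E uE.
  by exists (size s); apply/orP; left; apply/existsP; exists (in_tuple s).
pose d u := ex_minn (exP u).
have dP : forall u, u \in E -> exists2 t, W E e0 u t & size t = d u.
  move=> u uE; rewrite /d; case: ex_minnP => n /orP[/existsP[t Wt] _|]; last by rewrite uE.
  by exists t => //; rewrite size_tuple.
have dmin : forall u t, W E e0 u t -> d u <= size t.
  move=> u t Wt; rewrite /d; case: ex_minnP => n _ H; apply: H.
  by apply/orP; left; apply/existsP; exists (in_tuple t).
case: (@arg_maxnP _ e0 (mem E) d e0E) => e eE emax.
exists e => // u uE ue.
have [t Wt st] := dP u uE.
case: (boolP (e \in t)) => et.
  move: Wt st; case/splitPr: t / et => t1 t2 Wt st.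
  have := dmin _ _ (W_prefix Wt).
  have := emax u uE.
  rewrite -st size_rcons size_cat /=.
  case: t2 Wt {st} => [|z t2] Wt.
    by move: Wt ue => /and5P[_ _ _ /eqP <- _]; rewrite cats1 last_rcons eqxx.
  move=> h1 h2; have := leq_trans h1 h2; rewrite /=; lia.
exists t; move: Wt => /and5P[n0 tA h l ss]; apply/and5P; split => //.
apply/allP => x xt; suff : x \in E :\ e by []; rewrite in_setD1 (allP tA x xt : x \in E) andbT.
by apply/eqP => xe; move: et; rewrite -xe xt.
Qed.
End Aux.

Theorem theorem3 (T : finType) (S L : nat -> Prop) (conn : bool)
    (V : {set T}) (E : {set {set T}}) :
  inC S L conn V E -> (irreducible S L conn V E <-> #|E| = 1).
Proof.
move=> HC; have HC' := HC; move: HC' => [G HS HL Hconn].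
have G' := G; move: G' => [[V0 Hd] [H1 _]].
split.
- move=> [_ Hirr]; apply/eqP; rewrite eqn_leq; apply/andP; split.
  + rewrite leqNgt; apply/negP => /card_gt1P [e [f [eE fE fe]]].
    apply: Hirr.
    case: conn Hconn HC => [Hc|_] HC; last first.
      exists e => //; apply: (rem_inC HC eE fE) => //; by rewrite eq_sym.
    have [e' e'E Hw] := nocut (G.1) (Hc isT) eE.
    pose f' := if e' == e then f else e.
    have f'E : f' \in E by rewrite /f'; case: ifP.
    have f'e' : f' != e'.
      rewrite /f'; case: ifP => [/eqP -> //|/negbT]; by rewrite eq_sym.
    exists e' => //; apply: (rem_inC HC e'E f'E f'e') => _ v w vV wV.
    have [g gE vg] := rem_atom_block G vV.
    have [h hE wh] := rem_atom_block G wV.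
    move: (gE) (hE); rewrite /rem_blocks !in_setD1 => /andP[ge gE0] /andP[he hE0].
    have [p Wp] := Hw g gE0 ge.
    have [q Wq] := Hw h hE0 he.
    have [x xe] := set0Pn _ (Hd e eE).1.
    have := W_cat (adjI xe xe) (W_rev Wp) Wq.
    case/and5P => n0 esA /eqP hd /eqP ld ss.
    exists (rev p ++ q); split => //; first by rewrite hd.
    - by rewrite ld.
    by case: (rev p ++ q) ss.
  + have [v vV] := set0Pn _ V0; have [f fE _] := H1 v vV.
    by apply/card_gt0P; exists f.
- move=> /eqP/cards1P [e0 E1]; split => //; case=> e eE [[[V0' _] _] _ _ _].
  have [x xV'] := set0Pn _ V0'.
  have [f] := rem_atom_block G xV'.
  rewrite /rem_blocks in_setD1 E1 !in_set1 => /andP[fe /eqP fe0] _.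
  by move: eE fe; rewrite E1 in_set1 fe0 eq_sym => ->.
Qed.
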